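(* Let $n,T\in\mathbb{N}$. For $i=1,\dots,n$ and $t=1,\dots,T$ let $X_i(t),Y_i(t)$ be integrable real random variables, let $a_i\ge 0$ be fixed constants, and let $\beta_{\text{a}}(t)\in[0,1]$. Let $\pi_{\text{B}},\pi_{\text{in}}$ be real constants and $\pi_{\text{out}},\pi_{\text{grid}},\pi_{\text{rev}}$ constants with $\pi_{\text{grid}}\ge 0$, $\pi_{\text{rev}}\ge 0$. For $(C_{\text{a},1},\dots,C_{\text{a},n})\in[0,\infty)^n$ put $C_{\text{a}}=\sum_{i=1}^n C_{\text{a},i}$, $$P_{\text{in}}(t)=\sum_{i=1}^n\max\{a_iY_i(t)-X_i(t),0\},\qquad P_{\text{out}}(t)=\sum_{i=1}^n\min\{\max\{X_i(t)-a_iY_i(t),0\},\,C_{\text{a},i}\},$$ and $$J_{\text{a}}=\pi_{\text{B}}\sum_{i=1}^nC_{\text{a},i}+\sum_{t=1}^T\mathbb{E}\Big[\pi_{\text{in}}P_{\text{in}}(t)-\pi_{\text{out}}P_{\text{out}}(t)+\pi_{\text{grid}}\max\{P_{\text{out}}(t)-P_{\text{in}}(t)-\beta_{\text{a}}(t)C_{\text{a}},0\}+\pi_{\text{rev}}\max\{P_{\text{in}}(t)-P_{\text{out}}(t)-(1-\beta_{\text{a}}(t))C_{\text{a}},0\}\Big].$$ If $\pi_{\text{out}}\ge\pi_{\text{grid}}$, then $J_{\text{a}}$ is convex with respect to $(C_{\text{a},1},\dots,C_{\text{a},n})$.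
   Context: This is the cost of a manager who owns a joint battery of capacity $C_{\text{a}}$, allocated as daily purchase limits $C_{\text{a},i}$ to $n$ users; $a_i$ are the users' PV panel areas, $X_i(t)$ their daily consumption, $Y_i(t)$ the PV generation per unit area, $P_{\text{in}}(t)$ and $P_{\text{out}}(t)$ the total power bought from and sold to users, $\beta_{\text{a}}(t)C_{\text{a}}$ the stored power at the start of day $t$, $\pi_{\text{in}},\pi_{\text{out}}$ the buying and selling prices, $\pi_{\text{grid}}$ the price of power from the main grid, $\pi_{\text{rev}}$ the reverse-flow penalty, $\pi_{\text{B}}$ the unit storage cost. *)

(* Defs.v *)
From HB Require Import structures.
From mathcomp Require Import all_boot all_order all_algebra.
From mathcomp Require Import all_classical all_reals all_analysis.
Set Implicit Arguments. Unset Strict Implicit. Unset Printing Implicit Defensive.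
Import Order.TTheory GRing.Theory Num.Theory.
Local Open Scope ring_scope.

Section Cost.
Context {R : realType} {n : nat}.

Definition P_in (a x y : 'I_n -> R) : R :=
  \sum_(i < n) Num.max (a i * y i - x i) 0.

Definition P_out (a x y C : 'I_n -> R) : R :=
  \sum_(i < n) Num.min (Num.max (x i - a i * y i) 0) (C i).

Definition stage_cost (piin piout pigrid pirev beta : R)
    (a x y C : 'I_n -> R) : R :=
  let Pi := P_in a x y in
  let Po := P_out a x y C in
  let Ca := \sum_(i < n) C i in
  piin * Pi - piout * Po
  + pigrid * Num.max (Po - Pi - beta * Ca) 0
  + pirev * Num.max (Pi - Po - (1 - beta) * Ca) 0.

Definition J_a {d} {Omega : measurableType d} (Pr : probability Omega R)
    {T : nat} (X Y : 'I_n -> 'I_T -> Omega -> R) (a : 'I_n -> R)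
    (beta : 'I_T -> R) (piB piin piout pigrid pirev : R)
    (C : 'I_n -> R) : R :=
  piB * (\sum_(i < n) C i)
  + \sum_(t < T) Rintegral Pr setT
      (fun w => stage_cost piin piout pigrid pirev (beta t) a
                  (fun i => X i t w) (fun i => Y i t w) C).

End Cost.

Definition convex_on_nonneg {R : realType} {n : nat} (f : ('I_n -> R) -> R) : Prop :=
  forall (C1 C2 : 'I_n -> R) (l : R),
    (forall i, 0 <= C1 i) -> (forall i, 0 <= C2 i) -> 0 <= l <= 1 ->
    f (fun i => l * C1 i + (1 - l) * C2 i) <= l * f C1 + (1 - l) * f C2.

(* Main.v *)
Require Import Defs.
From HB Require Import structures.
From mathcomp Require Import all_boot all_order all_algebra.
From mathcomp Require Import all_classical all_reals all_analysis.
From mathcomp Require Import ring lra measurable_realfun.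
Import Order.TTheory GRing.Theory Num.Theory.
Local Open Scope ring_scope.

Section S.
Context {R : realType}.

Lemma maxcvx (l A B : R) : 0 <= l <= 1 ->
  Num.max (l * A + (1 - l) * B) 0 <= l * Num.max A 0 + (1 - l) * Num.max B 0.
Proof.
case/andP=> l0 l1; have l1' : 0 <= 1 - l by rewrite subr_ge0.
rewrite ge_max; apply/andP; split.
  by apply: lerD; apply: ler_wpM2l => //; rewrite le_max lexx.
by apply: addr_ge0; apply: mulr_ge0 => //; rewrite le_max lexx orbT.
Qed.

Definition h (piin piout pg pr b Pi P C : R) :=
  piin * Pi - piout * P + pg * Num.max (P - Pi - b * C) 0
  + pr * Num.max (Pi - P - (1 - b) * C) 0.

Lemma hmono (piin piout pg pr b Pi P P' C : R) : 0 <= pg -> 0 <= pr -> pg <= piout ->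
  P <= P' -> h piin piout pg pr b Pi P' C <= h piin piout pg pr b Pi P C.
Proof.
move=> g0 r0 gout PP; rewrite /h.
have m1 : Num.max (P' - Pi - b * C) 0 <= Num.max (P - Pi - b * C) 0 + (P' - P).
  rewrite ge_max; apply/andP; split.
    have : P - Pi - b * C <= Num.max (P - Pi - b * C) 0 by rewrite le_max lexx.
    lra.
  have : 0 <= Num.max (P - Pi - b * C) 0 by rewrite le_max lexx orbT.
  lra.
have m2 : Num.max (Pi - P' - (1 - b) * C) 0 <= Num.max (Pi - P - (1 - b) * C) 0.
  rewrite ge_max; apply/andP; split; last by rewrite le_max lexx orbT.
  rewrite le_max; apply/orP; left; lra.
have e1 := ler_wpM2l g0 m1.
have e2 := ler_wpM2l r0 m2.
have e3 : pg * (P' - P) <= piout * (P' - P) by apply: ler_wpM2r => //; lra.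
rewrite mulrDr in e1.
have -> : piout * P' = piout * P + piout * (P' - P) by ring.
lra.
Qed.

Lemma hcvx (piin piout pg pr b Pi P1 P2 Pl C1 C2 l : R) : 0 <= pg -> 0 <= pr -> pg <= piout ->
  0 <= l <= 1 -> l * P1 + (1 - l) * P2 <= Pl ->
  h piin piout pg pr b Pi Pl (l * C1 + (1 - l) * C2) <=
  l * h piin piout pg pr b Pi P1 C1 + (1 - l) * h piin piout pg pr b Pi P2 C2.
Proof.
move=> g0 r0 gout hl hP.
apply: le_trans (hmono piin piout pg pr b Pi _ _ _ g0 r0 gout hP) _.
have e1 := ler_wpM2l g0 (maxcvx l (P1 - Pi - b * C1) (P2 - Pi - b * C2) hl).
have e2 := ler_wpM2l r0 (maxcvx l (Pi - P1 - (1 - b) * C1) (Pi - P2 - (1 - b) * C2) hl).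
have E1 : l * (P1 - Pi - b * C1) + (1 - l) * (P2 - Pi - b * C2) =
   l * P1 + (1 - l) * P2 - Pi - b * (l * C1 + (1 - l) * C2) by ring.
have E2 : l * (Pi - P1 - (1 - b) * C1) + (1 - l) * (Pi - P2 - (1 - b) * C2) =
   Pi - (l * P1 + (1 - l) * P2) - (1 - b) * (l * C1 + (1 - l) * C2) by ring.
rewrite E1 in e1; rewrite E2 in e2.
rewrite /h.
set M1 := Num.max (P1 - Pi - b * C1) 0 in e1 *.
set M2 := Num.max (P2 - Pi - b * C2) 0 in e1 *.
set N1 := Num.max (Pi - P1 - (1 - b) * C1) 0 in e2 *.
set N2 := Num.max (Pi - P2 - (1 - b) * C2) 0 in e2 *.
set L1 := Num.max _ 0 in e1 *.
set L2 := Num.max _ 0 in e2 *.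
have -> : l * (piin * Pi - piout * P1 + pg * M1 + pr * N1) +
    (1 - l) * (piin * Pi - piout * P2 + pg * M2 + pr * N2) =
    piin * Pi - piout * (l * P1 + (1 - l) * P2) + pg * (l * M1 + (1 - l) * M2)
    + pr * (l * N1 + (1 - l) * N2) by ring.
lra.
Qed.


Lemma stage_cvx n (piin piout pg pr b : R) (a x y C1 C2 : 'I_n -> R) (l : R) :
  0 <= pg -> 0 <= pr -> pg <= piout -> 0 <= l <= 1 ->
  stage_cost piin piout pg pr b a x y (fun i => l * C1 i + (1 - l) * C2 i) <=
  l * stage_cost piin piout pg pr b a x y C1 + (1 - l) * stage_cost piin piout pg pr b a x y C2.
Proof.
move=> g0 r0 gout hl.
rewrite /stage_cost -!/(h _ _ _ _ _ _ _ _).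
have -> : \sum_(i < n) (l * C1 i + (1 - l) * C2 i) =
    l * \sum_(i < n) C1 i + (1 - l) * \sum_(i < n) C2 i.
  by rewrite big_split /= -!mulr_sumr.
apply: hcvx => //.
rewrite /P_out !mulr_sumr -big_split /=; apply: ler_sum => i _.
case/andP: hl => l0 l1; have l1' : 0 <= 1 - l by rewrite subr_ge0.
set u := Num.max _ 0.
have a1 : Num.min u (C1 i) <= u by rewrite ge_min lexx.
have a2 : Num.min u (C1 i) <= C1 i by rewrite ge_min lexx orbT.
have b1 : Num.min u (C2 i) <= u by rewrite ge_min lexx.
have b2 : Num.min u (C2 i) <= C2 i by rewrite ge_min lexx orbT.
rewrite le_min; apply/andP; split.
  apply: (@le_trans _ _ (l * u + (1 - l) * u)).
    by apply: lerD; apply: ler_wpM2l.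
  have -> : l * u + (1 - l) * u = u by ring.
  exact: lexx.
by apply: lerD; apply: ler_wpM2l.
Qed.

Section Int.
Context {d : measure_display} {Omega : measurableType d} (Pr : probability Omega R).
Definition I (f : Omega -> R) := Pr.-integrable setT (EFin \o f).

Lemma I_mes f : I f -> measurable_fun setT f.
Proof. by case/integrableP => /measurable_EFinP. Qed.

Lemma I_add f g : I f -> I g -> I (fun w => f w + g w).
Proof.
move=> If Ig; apply: (eq_integrable measurableT _ _ _ (integrableD measurableT If Ig)).
by move=> w _; rewrite /= EFinD.
Qed.

Lemma I_opp f : I f -> I (fun w => - f w).
Proof.
move=> If; apply: (eq_integrable measurableT _ _ _ (integrableN If)).
by move=> w _.
Qed.

Lemma I_scale k f : I f -> I (fun w => k * f w).
Proof.
move=> If; apply: (eq_integrable measurableT _ _ _ (integrableZl measurableT k If)).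
by move=> w _; rewrite /= EFinM.
Qed.

Lemma I_cst k : I (fun _ => k).
Proof. exact: (finite_measure_integrable_cst Pr k measurableT). Qed.

Lemma I_max f g : I f -> I g -> I (fun w => Num.max (f w) (g w)).
Proof.
move=> If Ig.
have Is := I_add _ _ (integrable_norm If) (integrable_norm Ig).
apply: (le_integrable measurableT _ _ Is).
  apply/measurable_EFinP; exact: measurable_maxr (I_mes _ If) (I_mes _ Ig).
move=> w _ /=; rewrite !lee_fin (ger0_norm (addr_ge0 (normr_ge0 _) (normr_ge0 _))).
rewrite /Num.max; case: ifP => _ /=; [rewrite lerDr | rewrite lerDl]; exact: normr_ge0.
Qed.

Lemma I_min f g : I f -> I g -> I (fun w => Num.min (f w) (g w)).
Proof.
move=> If Ig.
have Is := I_add _ _ (integrable_norm If) (integrable_norm Ig).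
apply: (le_integrable measurableT _ _ Is).
  apply/measurable_EFinP; exact: measurable_minr (I_mes _ If) (I_mes _ Ig).
move=> w _ /=; rewrite !lee_fin (ger0_norm (addr_ge0 (normr_ge0 _) (normr_ge0 _))).
rewrite /Num.min; case: ifP => _ /=; [rewrite lerDl | rewrite lerDr]; exact: normr_ge0.
Qed.

Lemma I_sum n (F : 'I_n -> Omega -> R) : (forall i, I (F i)) ->
  I (fun w => \sum_(i < n) F i w).
Proof.
move=> IF.
apply: (eq_integrable measurableT _ _ _ (integrable_sum measurableT (index_enum 'I_n) (P:=xpredT) (h:=fun i w => (F i w)%:E) (fun i _ => IF i))).
by move=> w _; rewrite /= sumEFin.
Qed.
End Int.
End S.

Theorem lemma3 (R : realType) (d : measure_display) (Omega : measurableType d)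
  (Pr : probability Omega R) (n T : nat)
  (X Y : 'I_n -> 'I_T -> Omega -> R) (a : 'I_n -> R) (beta : 'I_T -> R)
  (piB piin piout pigrid pirev : R)
  (hXm : forall i t, measurable_fun setT (X i t))
  (hYm : forall i t, measurable_fun setT (Y i t))
  (hXi : forall i t, Pr.-integrable setT (EFin \o X i t))
  (hYi : forall i t, Pr.-integrable setT (EFin \o Y i t))
  (ha : forall i, 0 <= a i)
  (hbeta : forall t, 0 <= beta t <= 1)
  (hgrid : 0 <= pigrid) (hrev : 0 <= pirev)
  (hout : pigrid <= piout) :
  convex_on_nonneg (J_a Pr X Y a beta piB piin piout pigrid pirev).
Proof.
move=> C1 C2 l _ _ hl.
have IS : forall C t, I Pr (fun w => stage_cost piin piout pigrid pirev (beta t) a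
                  (fun i => X i t w) (fun i => Y i t w) C).
  move=> C t; rewrite /stage_cost /P_in /P_out /=.
  repeat first [ apply: I_add | apply: I_opp | apply: I_scale | apply: I_sum => ? 
               | apply: I_max | apply: I_min | apply: I_cst | exact: hXi | exact: hYi ].
have key : forall t,
  Rintegral Pr setT (fun w => stage_cost piin piout pigrid pirev (beta t) a
     (fun i => X i t w) (fun i => Y i t w) (fun i => l * C1 i + (1 - l) * C2 i))
  <= l * Rintegral Pr setT (fun w => stage_cost piin piout pigrid pirev (beta t) a
     (fun i => X i t w) (fun i => Y i t w) C1)
   + (1 - l) * Rintegral Pr setT (fun w => stage_cost piin piout pigrid pirev (beta t) a
     (fun i => X i t w) (fun i => Y i t w) C2).
  move=> t.
  rewrite -RintegralZl //; last exact: IS.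
  rewrite -RintegralZl //; last exact: IS.
  rewrite -RintegralD //; last 2 first.
  - exact: (I_scale _ l _ (IS C1 t)).
  - exact: (I_scale _ (1 - l) _ (IS C2 t)).
  apply: le_Rintegral => //.
  - exact: IS.
  - apply: I_add; apply: I_scale; exact: IS.
  - by move=> w _; apply: stage_cvx.
rewrite /J_a.
have -> : \sum_(i < n) (l * C1 i + (1 - l) * C2 i) =
    l * \sum_(i < n) C1 i + (1 - l) * \sum_(i < n) C2 i.
  by rewrite big_split /= -!mulr_sumr.
set S1 := \sum_(i < n) C1 i; set S2 := \sum_(i < n) C2 i.
have hsum := ler_sum (index_enum (ordinal T)) (P := xpredT) (fun t _ => key t).
rewrite big_split /= -!mulr_sumr in hsum.
apply: le_trans (lerD (lexx _) hsum) _.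
set B1 := \sum_(t < T) _ ; set B2 := \sum_(t < T) _.
rewrite le_eqVlt; apply/orP; left; apply/eqP; ring.
Qed.
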